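(* Let $R$ be a ring with identity and $a,b,c\in R$. The following are equivalent: (i) $a$ is right $(b,c)$-invertible; (ii) ${}^\circ a\cap Rc=\{0\}$, $Rca\cap {}^\circ b=\{0\}$ and $R=abR+c^\circ$; (iii) ${}^\circ a\cap Rc=\{0\}$ and $R=abR+c^\circ$; (iv) $Rca\cap {}^\circ b=\{0\}$ and $R=abR+c^\circ$; (v) $R=abR+c^\circ$.
   Context: For $x\in R$: $xR=\{xr:r\in R\}$, $Rx=\{rx:r\in R\}$, $x^\circ=\{r: xr=0\}$, ${}^\circ x=\{r: rx=0\}$. The element $a$ is right $(b,c)$-invertible if there is $y\in R$ with $yR\subseteq bR$ and $cay=c$. *)

(* Defs.v *)
From mathcomp Require Import all_boot all_algebra.
Set Implicit Arguments. Unset Strict Implicit. Unset Printing Implicit Defensive.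
Import GRing.Theory.
Local Open Scope ring_scope.

Definition rmulset (R : nzRingType) (x : R) : R -> Prop := fun y => exists r, y = x * r.
Definition lmulset (R : nzRingType) (x : R) : R -> Prop := fun y => exists r, y = r * x.
Definition rann (R : nzRingType) (x : R) : R -> Prop := fun r => x * r = 0.
Definition lann (R : nzRingType) (x : R) : R -> Prop := fun r => r * x = 0.

Definition meet_zero (R : nzRingType) (S T : R -> Prop) : Prop :=
  forall x, (S x /\ T x) <-> x = 0.
Definition sum_full (R : nzRingType) (S T : R -> Prop) : Prop :=
  forall x : R, exists s t, S s /\ T t /\ x = s + t.

Definition right_bc_invertible (R : nzRingType) (a b c : R) : Prop :=
  exists y : R, (forall z, rmulset y z -> rmulset b z) /\ c * a * y = c.

(* Main.v *)
Require Import Defs.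
From mathcomp Require Import all_boot all_algebra.
Import GRing.Theory.
Local Open Scope ring_scope.

Lemma v_i (R : nzRingType) (a b c : R) :
  sum_full (rmulset (a * b)) (rann c) -> right_bc_invertible a b c.
Proof.
move=> H; have [s [t [[r ->] [Ht E]]]] := H 1.
exists (b * r); split.
  by move=> z [q ->]; exists (r * q); rewrite mulrA.
have : c * 1 = c * (a * b * r + t) by rewrite E.
rewrite mulrDr Ht addr0 mulr1 !mulrA => Ec; by rewrite {2}Ec.
Qed.

Lemma i_ii (R : nzRingType) (a b c : R) : right_bc_invertible a b c ->
  [/\ meet_zero (lann a) (lmulset c),
      meet_zero (lmulset (c * a)) (lann b)
    & sum_full (rmulset (a * b)) (rann c)].
Proof.
move=> [y [Hy E]]; have [s Es] := Hy y (ex_intro _ 1 (esym (mulr1 y))).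
subst y; split.
- move=> x; split.
    move=> [Hx [r Er]]; rewrite /lann in Hx.
    by rewrite Er -E !mulrA -Er Hx !mul0r.
  by move=> ->; split; [rewrite /lann mul0r | exists 0; rewrite mul0r].
- move=> x; split.
    move=> [[r Er] Hx]; rewrite /lann in Hx.
    by rewrite Er -{1}E !mulrA -(mulrA r c a) -Er Hx !mul0r.
  by move=> ->; split; [exists 0; rewrite mul0r | rewrite /lann mul0r].
- move=> x; exists (a * b * (s * x)), (x - a * b * (s * x)); split.
    by exists (s * x).
  split; last by rewrite addrC subrK.
  by rewrite /rann mulrBr !mulrA -(mulrA (c * a) b s) E subrr.
Qed.

Theorem theorem2p14 (R : nzRingType) (a b c : R) :
  let i   := right_bc_invertible a b c in
  let ii  := [/\ meet_zero (lann a) (lmulset c),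
                 meet_zero (lmulset (c * a)) (lann b)
               & sum_full (rmulset (a * b)) (rann c)] in
  let iii := meet_zero (lann a) (lmulset c) /\ sum_full (rmulset (a * b)) (rann c) in
  let iv  := meet_zero (lmulset (c * a)) (lann b) /\ sum_full (rmulset (a * b)) (rann c) in
  let v   := sum_full (rmulset (a * b)) (rann c) in
  [/\ (i <-> ii), (ii <-> iii), (iii <-> iv) & (iv <-> v)].
Proof.
move=> i ii iii iv v.
have Hv : v -> ii by move=> H; apply: i_ii; apply: v_i.
split.
- split; first exact: i_ii. by case=> _ _ H; apply: v_i.
- split; first by case. by case=> _ H; apply: Hv.
- split; first by case=> _ H; have [] := Hv H.
  by case=> _ H; have [] := Hv H.
- split; first by case. by move=> H; have [] := Hv H.
Qed.
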